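(* Let $n>0$ and $J\subseteq S$. The restriction of the weak order $\leq_S$ to the set $\mathfrak{S}_n^J(231)$ is a lattice, denoted $\mathcal{T}_n^J$. Although $\mathcal{T}_n^J$ is in general not a sublattice of $\mathrm{Weak}(\mathfrak{S}_n^J)$, it is a lattice quotient of $\mathrm{Weak}(\mathfrak{S}_n^J)$, i.e. there is a lattice congruence $\Theta$ on $\mathrm{Weak}(\mathfrak{S}_n^J)$ such that the quotient lattice $\mathrm{Weak}(\mathfrak{S}_n^J)/\Theta$ is isomorphic to $\mathcal{T}_n^J$.
   Context: Let $\mathfrak{S}_n$ be the symmetric group on $[n]=\{1,\dots,n\}$, $s_i=(i,i+1)$ for $i\in[n-1]$, and $S=\{s_1,\dots,s_{n-1}\}$. Write permutations in one-line notation $w=w_1w_2\cdots w_n$ with $w_i=w(i)$. The inversion set is $\mathrm{inv}(w)=\{(i,j):1\le i<j\le n,\ w_i>w_j\}$ and the (left) weak order is $u\le_S v$ iff $\mathrm{inv}(u)\subseteq\mathrm{inv}(v)$. For $J\subseteq S$, the parabolic quotient is $\mathfrak{S}_n^J=\{w\in\mathfrak{S}_n : w<_S ws\text{ for all }s\in J\}$ (concretely: $w_i<w_{i+1}$ whenever $s_i\in J$); $\mathrm{Weak}(\mathfrak{S}_n^J)$ is $\mathfrak{S}_n^J$ with the restricted order, which is a lattice (it is the weak order interval $[e,w_\circ^J]$). Writing $J=S\setminus\{s_{j_1},\dots,s_{j_r}\}$ with $j_1<\dots<j_r$, the $J$-regions are the blocks $\{1,\dots,j_1\},\{j_1+1,\dots,j_2\},\dots,\{j_r+1,\dots,n\}$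 of $[n]$. An element $w\in\mathfrak{S}_n^J$ contains a $(J,231)$-pattern if there are indices $i<j<k$, lying in three pairwise different $J$-regions, with $w_k<w_i<w_j$ and $w_i=w_k+1$; otherwise $w$ is $(J,231)$-avoiding, and $\mathfrak{S}_n^J(231)$ denotes the set of $(J,231)$-avoiding elements of $\mathfrak{S}_n^J$. A lattice congruence on a lattice $L$ is an equivalence relation $\Theta$ such that $x\,\Theta\, y$ implies $(x\wedge z)\,\Theta\,(y\wedge z)$ and $(x\vee z)\,\Theta\,(y\vee z)$ for all $z$; the quotient $L/\Theta$ carries the induced lattice operations. *)

(* Defs.v *)
(* Permutations of [n] are encoded as 'S_n = {perm 'I_n},
   using 0-based positions/values (position i <-> i+1 in the paper).
   The simple transposition s_{k+1} (paper) is indexed by k : 'I_n.-1 and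
   swaps positions k and k+1 (0-based). *)
From mathcomp Require Import all_boot all_fingroup.
Set Implicit Arguments. Unset Strict Implicit. Unset Printing Implicit Defensive.

Section Defs.
Variable n : nat.

Definition weak_le (u v : 'S_n) : Prop :=
  forall i j : 'I_n, i < j -> u j < u i -> v j < v i.

Definition in_quotient (J : {set 'I_n.-1}) (w : 'S_n) : Prop :=
  forall (k : 'I_n.-1) (i j : 'I_n),
    k \in J -> val i = val k -> val j = (val k).+1 -> w i < w j.

Definition same_region (J : {set 'I_n.-1}) (a b : 'I_n) : Prop :=
  forall k : 'I_n.-1, a <= k -> k < b -> k \in J.

Definition has_J231 (J : {set 'I_n.-1}) (w : 'S_n) : Prop :=
  exists i j k : 'I_n,
    [/\ (i < j) && (j < k),
        [/\ ~ same_region J i j, ~ same_region J j k & ~ same_region J i k],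
        (w k < w i) && (w i < w j) & val (w i) = (val (w k)).+1].

Definition avoid_J231 (J : {set 'I_n.-1}) (w : 'S_n) : Prop :=
  in_quotient J w /\ ~ has_J231 J w.

Definition is_meet (P : 'S_n -> Prop) (x y m : 'S_n) : Prop :=
  [/\ P m, weak_le m x, weak_le m y &
      forall z, P z -> weak_le z x -> weak_le z y -> weak_le z m].

Definition is_join (P : 'S_n -> Prop) (x y m : 'S_n) : Prop :=
  [/\ P m, weak_le x m, weak_le y m &
      forall z, P z -> weak_le x z -> weak_le y z -> weak_le m z].

Definition is_lattice (P : 'S_n -> Prop) : Prop :=
  forall x y, P x -> P y ->
    (exists m, is_meet P x y m) /\ (exists j, is_join P x y j).

Definition lattice_congruence (P : 'S_n -> Prop) (Th : 'S_n -> 'S_n -> Prop)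
  : Prop :=
  [/\ (forall x, P x -> Th x x),
      (forall x y, P x -> P y -> Th x y -> Th y x),
      (forall x y z, P x -> P y -> P z -> Th x y -> Th y z -> Th x z),
      (forall x y z m m', P x -> P y -> P z -> Th x y ->
          is_meet P x z m -> is_meet P y z m' -> Th m m') &
      (forall x y z m m', P x -> P y -> P z -> Th x y ->
          is_join P x z m -> is_join P y z m' -> Th m m')].

(* order of the quotient lattice P/Th: [x] <= [y] iff [x /\ y] = [x] *)
Definition quotient_le (P : 'S_n -> Prop) (Th : 'S_n -> 'S_n -> Prop)
  (x y : 'S_n) : Prop :=
  exists m, is_meet P x y m /\ Th m x.

(* (P/Th) is isomorphic (as a poset, hence as a lattice) to (Q, weak_le):
   phi induces a bijection from the Th-classes of P onto Q that is an
   order isomorphism. *)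
Definition quotient_iso (P : 'S_n -> Prop) (Th : 'S_n -> 'S_n -> Prop)
  (Q : 'S_n -> Prop) : Prop :=
  exists phi : 'S_n -> 'S_n,
    [/\ (forall x, P x -> Q (phi x)),
        (forall t, Q t -> exists x, P x /\ phi x = t),
        (forall x y, P x -> P y -> (Th x y <-> phi x = phi y)) &
        (forall x y, P x -> P y ->
           (quotient_le P Th x y <-> weak_le (phi x) (phi y)))].

End Defs.

(* Main.v *)
Require Import Defs.
From mathcomp Require Import all_boot all_fingroup.
From mathcomp Require Import zify.
Set Implicit Arguments. Unset Strict Implicit. Unset Printing Implicit Defensive.


Lemma connect_indl (T : finType) (R : rel T) (P : T -> T -> Prop) :
  (forall x, P x x) ->
  (forall x y z, R x y -> connect R y z -> P y z -> P x z) ->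
  forall x y, connect R x y -> P x y.
Proof.
move=> H0 HS x y /connectP [p]; elim: p x => [|a p IH] x /=.
  by move=> _ ->.
move=> /andP [Rxa pa] Ey; apply: (HS x a y Rxa).
  by apply/connectP; exists p.
exact: IH.
Qed.

Section S.
Variable n : nat.
Variable J : {set 'I_n.-1}.

Definition Tw (w : 'S_n) : rel 'I_n := fun i k => (i < k) && (w k < w i).
Definition TC (R : rel 'I_n) : rel 'I_n := fun i k => (i < k) && connect R i k.
Definition fwd (R : rel 'I_n) := forall i k : 'I_n, R i k -> i < k.
Definition cotr (R : rel 'I_n) :=
  forall i j k : 'I_n, i < j -> j < k -> R i k -> R i j || R j k.
Definition tr (R : rel 'I_n) := forall i j k : 'I_n, R i j -> R j k -> R i k.

Lemma weak_leE u v : weak_le u v <-> forall i k, Tw u i k -> Tw v i k.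
Proof.
split=> H i k.
  by move=> /andP [ik uki]; rewrite /Tw ik H.
by move=> ik uki; have /andP [] := H i k (introT andP (conj ik uki)).
Qed.

Lemma Tw_fwd w : fwd (Tw w). Proof. by move=> i k /andP []. Qed.

Lemma Tw_tr w : tr (Tw w).
Proof.
move=> i j k /andP [ij wji] /andP [jk wkj]; apply/andP; split.
  exact: ltn_trans ij jk.
exact: ltn_trans wkj wji.
Qed.

Lemma Tw_cotr w : cotr (Tw w).
Proof.
move=> i j k ij jk /andP [ik wki]; rewrite /Tw ij jk /=.
case: (ltngtP (w j) (w i)) => //.
  by move=> wij; rewrite (ltn_trans wki wij) orbT.
by move=> /val_inj /perm_inj E; move: ij; rewrite E ltnn.
Qed.

Lemma connect_fwd R : fwd R -> forall i k, connect R i k -> i <= k.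
Proof.
move=> fR; apply: connect_indl => // x y z /fR xy _ yz.
exact: leq_trans (ltnW xy) yz.
Qed.

Lemma TC_tr R : tr (TC R).
Proof.
move=> i j k /andP [ij cij] /andP [jk cjk]; rewrite /TC (ltn_trans ij jk).
exact: connect_trans cij cjk.
Qed.

Lemma TC_fwd R : fwd (TC R). Proof. by move=> i k /andP []. Qed.

Lemma TC1 R : fwd R -> forall i k, R i k -> TC R i k.
Proof. by move=> fR i k Rik; rewrite /TC fR //= connect1. Qed.

Lemma TC_cotr R : fwd R -> cotr R -> cotr (TC R).
Proof.
move=> fR cR.
suff H : forall a c, connect R a c -> forall b : 'I_n, a < b -> b < c ->
    connect R a b \/ connect R b c.
  move=> i j k ij jk /andP [_ cik].
  by case: (H i k cik j ij jk) => C; rewrite /TC ?ij ?jk C ?orbT.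
apply: connect_indl.
  by move=> x b xb bx; move: (ltn_trans xb bx); rewrite ltnn.
move=> x y z Rxy cyz IH b xb bz.
case: (ltngtP b y) => [by_|yb|eb].
- case/orP: (cR x b y xb by_ Rxy) => H.
    by left; apply: connect1.
  by right; apply: connect_trans (connect1 H) cyz.
- case: (IH b yb bz) => H; last by right.
  by left; apply: connect_trans (connect1 Rxy) H.
- by left; rewrite (val_inj eb) connect1.
Qed.

Lemma TC_sub R Q : fwd R -> tr Q -> (forall i k, R i k -> Q i k) ->
  forall i k, TC R i k -> Q i k.
Proof.
move=> fR tQ RQ.
suff H : forall a c, connect R a c -> a = c \/ Q a c.
  by move=> i k /andP [ik /H [E|//]]; move: ik; rewrite E ltnn.
apply: connect_indl; first by left.
move=> x y z Rxy _ [<-|Qyz]; right; first exact: RQ.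
exact: tQ (RQ _ _ Rxy) Qyz.
Qed.

End S.


Section S2.
Variable n : nat.

Definition prec (S : rel 'I_n) (j i : 'I_n) : bool :=
  ((j < i) && ~~ S j i) || ((i < j) && S i j).

Lemma prec_irr S (i : 'I_n) : prec S i i = false.
Proof. by rewrite /prec ltnn. Qed.

Lemma prec_lt S (a b : 'I_n) : a < b -> prec S a b = ~~ S a b.
Proof. by move=> ab; rewrite /prec ab /= ltnNge (ltnW ab) /= orbF. Qed.

Lemma prec_gt S (a b : 'I_n) : b < a -> prec S a b = S b a.
Proof. by move=> ba; rewrite /prec ba ltnNge (ltnW ba). Qed.

Lemma mkf_lt S (i : 'I_n) : #|[pred j | prec S j i]| < n.
Proof.
apply: (@leq_ltn_trans #|predC1 i|).
  apply: subset_leq_card.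
  by apply/subsetP => j; rewrite !inE; apply: contraTneq => ->; rewrite prec_irr.
by rewrite cardC1 card_ord; case: n i => [[]|m] //.
Qed.

Definition mkf S i : 'I_n := Ordinal (mkf_lt S i).

Definition mkperm S : 'S_n :=
  match injectiveP (mkf S) with ReflectT inj => perm inj | ReflectF _ => 1%g end.

Variable S : rel 'I_n.
Hypothesis fS : fwd S.
Hypothesis tS : tr S.
Hypothesis cS : cotr S.

Lemma prec_trans (a b c : 'I_n) : prec S a b -> prec S b c -> prec S a c.
Proof.
move=> pab pbc.
have [ab|ba|/val_inj eab] := ltngtP a b; last by move: pab; rewrite eab prec_irr.
- rewrite prec_lt // in pab.
  have [bc|cb|/val_inj ebc] := ltngtP b c; last by move: pbc; rewrite ebc prec_irr.
  + rewrite prec_lt // in pbc; rewrite prec_lt ?(ltn_trans ab bc) //.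
    apply/negP => Sac; case/orP: (cS ab bc Sac) => H.
      by rewrite H in pab.
    by rewrite H in pbc.
  + rewrite prec_gt // in pbc.
    have [ac|ca|/val_inj eac] := ltngtP a c.
    * rewrite prec_lt //; apply/negP => Sac.
      by rewrite (tS Sac pbc) in pab.
    * rewrite prec_gt //; case/orP: (cS ca ab pbc) => // H.
      by rewrite H in pab.
    * by move: pab; rewrite eac pbc.
- rewrite prec_gt // in pab.
  have [bc|cb|/val_inj ebc] := ltngtP b c; last by move: pbc; rewrite ebc prec_irr.
  + rewrite prec_lt // in pbc.
    have [ac|ca|/val_inj eac] := ltngtP a c.
    * rewrite prec_lt //; apply/negP => Sac.
      by rewrite (tS pab Sac) in pbc.
    * rewrite prec_gt //; case/orP: (cS bc ca pab) => // H.
      by rewrite H in pbc.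
    * by move: pab; rewrite eac (negbTE pbc).
  + rewrite prec_gt // in pbc; rewrite prec_gt ?(ltn_trans cb ba) //.
    exact: tS pbc pab.
Qed.

Lemma mkf_mono (j i : 'I_n) : prec S j i -> mkf S j < mkf S i.
Proof.
move=> pji; rewrite /= proper_card //; apply/properP; split.
  apply/subsetP => k; rewrite !inE => pkj; exact: prec_trans pkj pji.
by exists j; rewrite !inE ?prec_irr.
Qed.

Lemma mkf_inj : injective (mkf S).
Proof.
move=> i j E.
have [ij|ji|/val_inj //] := ltngtP i j.
- case: (boolP (S i j)) => Sij.
    by have := mkf_mono (i:=i) (j:=j); rewrite prec_gt // Sij E ltnn => /(_ isT).
  by have := mkf_mono (i:=j) (j:=i); rewrite prec_lt // Sij E ltnn => /(_ isT).
- case: (boolP (S j i)) => Sji.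
    by have := mkf_mono (i:=j) (j:=i); rewrite prec_gt // Sji E ltnn => /(_ isT).
  by have := mkf_mono (i:=i) (j:=j); rewrite prec_lt // Sji E ltnn => /(_ isT).
Qed.

Lemma mkpermE (i : 'I_n) : mkperm S i = mkf S i.
Proof.
rewrite /mkperm; case: injectiveP => [inj|]; first by rewrite permE.
by move: mkf_inj.
Qed.

Lemma mkpermT (i k : 'I_n) : i < k -> (mkperm S k < mkperm S i) = S i k.
Proof.
move=> ik; rewrite !mkpermE.
case: (boolP (S i k)) => Sik.
  by apply: mkf_mono; rewrite prec_gt.
apply/negbTE; rewrite -leqNgt ltnW //; apply: mkf_mono; rewrite prec_lt //.
Qed.

Lemma mkpermTw (i k : 'I_n) : Tw (mkperm S) i k = S i k.
Proof.
rewrite /Tw; case: (ltnP i k) => ik; first by rewrite mkpermT.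
by apply/esym/negbTE/negP => /fS; rewrite ltnNge ik.
Qed.

End S2.

Section S3.
Variable n : nat.

Lemma card_lt_ord (m : 'I_n) : #|[pred v : 'I_n | v < m]| = m.
Proof.
have mn : m <= n by apply: ltnW.
have winj : injective (widen_ord mn) by move=> x y E; apply: val_inj; exact: (congr1 val E).
rewrite -[in RHS](card_ord m) -(card_imset _ winj).
apply: eq_card => v; rewrite inE; apply/idP/imsetP.
  by move=> vm; exists (Ordinal vm) => //; apply: val_inj.
by case=> v' _ ->; rewrite /=.
Qed.

Lemma perm_val (w : 'S_n) i : val (w i) = #|[pred j | w j < w i]|.
Proof.
transitivity #|[pred v : 'I_n | v < w i]|; first by rewrite card_lt_ord.
rewrite -[RHS](card_imset _ (@perm_inj _ w)).
apply: eq_card => v; rewrite inE; apply/idP/imsetP.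
  by move=> vw; exists ((w^-1)%g v); rewrite ?inE permKV.
by case=> j; rewrite inE => H ->.
Qed.

Lemma perm_ltN (w : 'S_n) (j i : 'I_n) : j != i -> (w j < w i) = ~~ (w i < w j).
Proof.
move=> ji; rewrite ltnNge leq_eqVlt negb_or.
have -> : (nat_of_ord (w i) == w j) = false.
  by rewrite (inj_eq val_inj) (inj_eq (@perm_inj _ w)) eq_sym (negbTE ji).
done.
Qed.

Lemma weak_antisym (u v : 'S_n) : weak_le u v -> weak_le v u -> u = v.
Proof.
move=> /weak_leE uv /weak_leE vu.
have E : forall i k, Tw u i k = Tw v i k.
  by move=> i k; apply/idP/idP; [apply: uv | apply: vu].
apply/permP => i; apply: val_inj; rewrite (perm_val u) (perm_val v); apply: eq_card => j.
rewrite !inE.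
have [ji|ij|/val_inj ->] := ltngtP j i; last by rewrite !ltnn.
- have := E j i; rewrite /Tw ji /= => Eji.
  have jni : j != i by rewrite neq_ltn ji.
  by rewrite (perm_ltN u jni) (perm_ltN v jni) Eji.
- by have := E i j; rewrite /Tw ij.
Qed.

End S3.


Section S4.
Variable n : nat.
Variable J : {set 'I_n.-1}.

Definition sameb (a b : 'I_n) : bool :=
  [forall k : 'I_n.-1, (a <= k) ==> (k < b) ==> (k \in J)].

Lemma sameP a b : reflect (same_region J a b) (sameb a b).
Proof.
apply: (iffP forallP) => H k.
  by move=> ak kb; have := H k; rewrite ak kb.
by apply/implyP => ak; apply/implyP => kb; apply: H.
Qed.

Lemma sameb_r (a b c : 'I_n) : b <= c -> sameb a c -> sameb a b.
Proof.
move=> bc /forallP H; apply/forallP => k; apply/implyP => ak; apply/implyP => kb.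
by have := H k; rewrite ak (leq_trans kb bc).
Qed.

Lemma sameb_l (a b c : 'I_n) : a <= b -> sameb a c -> sameb b c.
Proof.
move=> ab /forallP H; apply/forallP => k; apply/implyP => bk; apply/implyP => kc.
by have := H k; rewrite (leq_trans ab bk) kc.
Qed.

Definition sep (i j k : 'I_n) : bool :=
  [&& i < j, j < k, ~~ sameb i j & ~~ sameb j k].

Lemma sep_sub (i a j b k : 'I_n) : i <= a -> b <= k -> sep a j b -> sep i j k.
Proof.
move=> ia bk /and4P [aj jb saj sjb]; apply/and4P; split.
- exact: leq_ltn_trans ia aj.
- exact: leq_trans jb bk.
- by apply: contra saj; apply: sameb_l.
- by apply: contra sjb; apply: sameb_r.
Qed.

Definition Kd (w : 'S_n) : rel 'I_n :=
  fun i k => Tw w i k && [forall j, sep i j k ==> (w j < w i)].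

Lemma Kd_fwd w : fwd (Kd w).
Proof. by move=> i k /andP [/andP []]. Qed.

Lemma Kd_sub w i k : Kd w i k -> Tw w i k.
Proof. by case/andP. Qed.

Lemma Kd_cotr w : cotr (Kd w).
Proof.
move=> i j k ij jk /andP [Tik /forallP H].
case: (boolP (Tw w i j)) => Tij.
  apply/orP; left; rewrite /Kd Tij; apply/forallP => j'; apply/implyP => s.
  by have := H j'; rewrite (sep_sub (leqnn i) (ltnW jk) s).
have /orP [Tij'|Tjk] := Tw_cotr ij jk Tik; first by rewrite Tij' in Tij.
have wij : w i < w j.
  move: Tij; rewrite /Tw ij /= -leqNgt leq_eqVlt => /orP [/eqP E|//].
  by move: ij; rewrite (perm_inj (val_inj E)) ltnn.
apply/orP; right; rewrite /Kd Tjk; apply/forallP => j'; apply/implyP => s.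
have := H j'; rewrite (sep_sub (ltnW ij) (leqnn k) s) /= => wj'.
exact: ltn_trans wj' wij.
Qed.

Lemma TCKd_tr w : tr (TC (Kd w)). Proof. exact: TC_tr. Qed.
Lemma TCKd_cotr w : cotr (TC (Kd w)).
Proof. exact: TC_cotr (@Kd_fwd w) (@Kd_cotr w). Qed.

Definition dd (w : 'S_n) : 'S_n := mkperm (TC (Kd w)).

Lemma ddT w i k : Tw (dd w) i k = TC (Kd w) i k.
Proof. by apply: mkpermTw; [exact: TC_fwd | exact: TCKd_tr | exact: TCKd_cotr]. Qed.

Lemma dd_le w : weak_le (dd w) w.
Proof.
apply/weak_leE => i k; rewrite ddT; apply: TC_sub.
- exact: Kd_fwd.
- exact: Tw_tr.
- exact: Kd_sub.
Qed.

Lemma connect_first (R : rel 'I_n) i k : connect R i k ->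
  i = k \/ exists l, R i l /\ connect R l k.
Proof.
move=> /connectP [[|l p]] /=; first by move=> _ ->; left.
move=> /andP [Ril pl] E; right; exists l; split=> //.
by apply/connectP; exists p.
Qed.

Lemma noSame (i j k : 'I_n) : sep i j k ->
  [/\ ~ same_region J i j, ~ same_region J j k & ~ same_region J i k].
Proof.
move=> /and4P [ij jk sij sjk]; split => /sameP H.
- by rewrite H in sij.
- by rewrite H in sjk.
- by move: sij; rewrite (sameb_r (ltnW jk) H).
Qed.

Lemma dd_nopat w : ~ has_J231 J (dd w).
Proof.
move=> [i [j [k [/andP [ij jk] [nij njk nik] /andP [xki xij] adj0]]]].
have adj : nat_of_ord (dd w i) = (nat_of_ord (dd w k)).+1 := adj0.
have s : sep i j k.
  rewrite /sep ij jk /=; apply/andP; split; apply/negP => /sameP ?.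
    exact: nij.
  exact: njk.
have : Tw (dd w) i k by rewrite /Tw (ltn_trans ij jk).
rewrite ddT => /andP [ik /connect_first [E|[l [Kil clk]]]].
  by move: ik; rewrite E ltnn.
have il := Kd_fwd Kil.
have [lk|kl|/val_inj E] := ltngtP l k.
- have : Tw (dd w) i l by rewrite ddT TC1 //; exact: Kd_fwd.
  have : Tw (dd w) l k by rewrite ddT /TC lk.
  rewrite /Tw => /andP [_ h1] /andP [_ h2]; lia.
- by have := connect_fwd (@Kd_fwd w) clk; rewrite leqNgt kl.
move: Kil; rewrite E => /andP [_ /forallP H].
have Kij : Kd w i j.
  rewrite /Kd /Tw ij /=; have := H j; rewrite s /= => -> /=.
  apply/forallP => j'; apply/implyP => s'.
  by have := H j'; rewrite (sep_sub (leqnn i) (ltnW jk) s').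
have : Tw (dd w) i j by rewrite ddT TC1 //; exact: Kd_fwd.
by rewrite /Tw => /andP [_]; rewrite ltnNge (ltnW xij).
Qed.

Lemma pat_lemma (a : 'S_n) i j k : ~ has_J231 J a -> sep i j k ->
  a k < a i -> a i < a j -> exists l : 'I_n, (i < l < k) && (a k < a l < a i).
Proof.
move=> nh s aki aij.
case: (boolP [exists l : 'I_n, (i < l < k) && (a k < a l < a i)]) => [/existsP //|].
rewrite negb_exists => /forallP H; exfalso.
have /and4P [ij jk sij sjk] := s.
have claim : forall t (v : 'I_n), nat_of_ord v = a k + t -> v < a i -> k <= (a^-1)%g v.
  elim=> [|t IH] v vE vlt.
    have -> : v = a k by apply: val_inj => /=; rewrite vE addn0.
    by rewrite permK.
  have v'lt : a k + t < n by have := ltn_ord v; lia.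
  have q_ge : k <= (a^-1)%g (Ordinal v'lt) by apply: IH => //=; lia.
  set q := (a^-1)%g (Ordinal v'lt) in q_ge.
  set p := (a^-1)%g v.
  have ap : a p = v by rewrite /p permKV.
  have aq : nat_of_ord (a q) = a k + t by rewrite /q permKV.
  have [pi|ip|/val_inj pE] := ltngtP p i.
  - exfalso; apply: nh; exists p, j, q; split.
    + by rewrite (ltn_trans pi ij) (leq_trans jk q_ge).
    + split => /sameP H0.
      * by move: sij; rewrite (sameb_l (ltnW pi) H0).
      * by move: sjk; rewrite (sameb_r q_ge H0).
      * move: sij; rewrite (sameb_l (ltnW pi)) //.
        exact: sameb_r (ltnW (leq_trans jk q_ge)) H0.
    + by rewrite ap aq vE; apply/andP; split; lia.
    + by rewrite /= ap aq vE addnS.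
  - case: (ltngtP p k) => [pk|//|/val_inj pE].
      by have := H p; rewrite ip pk ap vE /=; lia.
    by move: vE; rewrite -ap pE; lia.
  - by move: vlt; rewrite -ap pE ltnn.
have vlt : (a i).-1 < n by have := ltn_ord (a i); lia.
set q := (a^-1)%g (Ordinal vlt).
have q_ge : k <= q by apply: (claim ((a i).-1 - a k)) => /=; lia.
have aq : nat_of_ord (a q) = (a i).-1 by rewrite /q permKV.
apply: nh; exists i, j, q; split.
- by rewrite ij (leq_trans jk q_ge).
- split => /sameP H1.
  + by rewrite H1 in sij.
  + by move: sjk; rewrite (sameb_r q_ge H1).
  + by move: sij; rewrite (sameb_r (ltnW (leq_trans jk q_ge)) H1).
- by rewrite aq; apply/andP; split; lia.
- by rewrite /= aq; lia.
Qed.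

End S4.


Section S5.
Variable n : nat.
Variable J : {set 'I_n.-1}.

Lemma Tw_neg (w : 'S_n) (i k : 'I_n) : i < k -> ~~ Tw w i k -> w i < w k.
Proof.
move=> ik; rewrite /Tw ik /= perm_ltN ?negbK //.
by rewrite neq_ltn ik orbT.
Qed.

Lemma dd_max (w a : 'S_n) : ~ has_J231 J a -> weak_le a w -> weak_le a (dd J w).
Proof.
move=> nh /weak_leE aw; apply/weak_leE => i k; rewrite ddT.
suff H : forall d (i k : 'I_n), k - i <= d -> Tw a i k -> TC (Kd J w) i k.
  by apply: H (leqnn _).
elim=> [|d IH] {}i {}k kid Taik.
  by have /andP [ik _] := Taik; lia.
case: (boolP (Kd J w i k)) => K.
  by apply: TC1 => //; exact: Kd_fwd.
have Twik := aw _ _ Taik.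
move: K; rewrite /Kd Twik /= negb_forall => /existsP [j].
rewrite negb_imply -leqNgt => /andP [s wij].
have /and4P [ij jk _ _] := s.
have aij : a i < a j.
  apply: Tw_neg => //; apply/negP => Tij.
  by have /andP [_] := aw _ _ Tij; rewrite ltnNge wij.
have /andP [ik aki] := Taik.
have [l /andP [/andP [il lk] /andP [akl ali]]] := pat_lemma nh s aki aij.
apply: (@TC_tr _ _ _ l).
  by apply: IH; [lia | rewrite /Tw il ali].
by apply: IH; [lia | rewrite /Tw lk akl].
Qed.

Definition TU (p q : 'S_n) : rel 'I_n := fun a b => Tw p a b || Tw q a b.
Definition KU (p q : 'S_n) : rel 'I_n := fun a b => Kd J p a b || Kd J q a b.

Lemma TU_fwd p q : fwd (TU p q).
Proof. by move=> i k /orP [] /andP []. Qed.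

Lemma C1 (p q v : 'S_n) :
  (forall i k, Tw v i k = TC (TU p q) i k) ->
  forall i k, Kd J v i k -> TC (KU p q) i k.
Proof.
move=> HV.
suff H : forall d (i k : 'I_n), k - i <= d -> Kd J v i k -> TC (KU p q) i k.
  by move=> i k; apply: H (leqnn _).
elim=> [|d IH] i k kid Kik.
  by have /andP [/andP [ik _] _] := Kik; lia.
have /andP [Tvik /forallP Hess] := Kik.
have /andP [ik vki] := Tvik.
case: (boolP [exists j, sep J i j k && (v k < v j)]).
  move=> /existsP [j0 Pj0].
  case: (@arg_maxnP _ j0 (fun j => sep J i j k && (v k < v j)) (fun j => nat_of_ord (v j)) Pj0).
  move=> jm /andP [sm vkm] Hmax.
  have /and4P [ijm jmk _ _] := sm.
  have vmi : v jm < v i by have := Hess jm; rewrite sm.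
  apply: (@TC_tr _ _ _ jm).
    apply: IH; first lia.
    rewrite /Kd /Tw ijm vmi /=; apply/forallP => j'; apply/implyP => s'.
    by have := Hess j'; rewrite (sep_sub (leqnn i) (ltnW jmk) s').
  apply: IH; first lia.
  rewrite /Kd /Tw jmk vkm /=; apply/forallP => j'; apply/implyP => s'.
  have s'' := sep_sub (ltnW ijm) (leqnn k) s'.
  have /and4P [jmj' j'k _ _] := s'.
  case: (ltnP (v k) (v j')) => vkj'.
    have := Hmax j'; rewrite s'' vkj' /= => /(_ isT) le.
    rewrite ltn_neqAle le andbT; apply/negP => /eqP /val_inj /perm_inj E.
    by move: jmj'; rewrite E ltnn.
  exact: leq_ltn_trans vkj' vkm.
rewrite negb_exists => /forallP Hno.
move: (Tvik); rewrite HV => /andP [_ cik]; rewrite /TC ik /=.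
suff G : forall x y, connect (TU p q) x y -> y = k -> i <= x -> connect (KU p q) x y.
  exact: G.
apply: connect_indl => // x y z Rxy cyz IHy zk ix.
have xy := TU_fwd Rxy.
have yk : y <= k by move: (connect_fwd (@TU_fwd p q) cyz); rewrite zk.
have vky : v k <= v y.
  case: (ltngtP y k) => [lt|gt|/val_inj E]; last by rewrite E.
    have : Tw v y k by rewrite HV /TC lt -zk.
    by case/andP => _ /ltnW.
  by move: yk; rewrite leqNgt gt.
have key : forall r : 'S_n, Tw r x y -> (forall a b, Tw r a b -> Tw v a b) -> Kd J r x y.
  move=> r Tr rv; rewrite /Kd Tr /=; apply/forallP => j; apply/implyP => s.
  have /and4P [xj jy _ _] := s.
  apply/negP => /negP; rewrite -leqNgt leq_eqVlt => /orP [/eqP /val_inj /perm_inj E|rxj].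
    by move: xj; rewrite E ltnn.
  have /andP [_ ryx] := Tr.
  have : Tw v j y by apply: rv; rewrite /Tw jy (ltn_trans ryx rxj).
  case/andP => _ vyj.
  have := Hno j; rewrite (sep_sub ix yk s) /= -leqNgt => vjk.
  by have := leq_trans vjk vky; rewrite leqNgt vyj.
apply: (connect_trans (connect1 _) (IHy zk (ltnW (leq_ltn_trans ix xy)))).
have sub1 : forall a b, Tw p a b -> Tw v a b.
  move=> a b Tab; rewrite HV; apply: TC1; first exact: TU_fwd.
  by rewrite /TU Tab.
have sub2 : forall a b, Tw q a b -> Tw v a b.
  move=> a b Tab; rewrite HV; apply: TC1; first exact: TU_fwd.
  by rewrite /TU Tab orbT.
case/orP: Rxy => T; apply/orP; [left; exact: key T sub1 | right; exact: key T sub2].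
Qed.

Definition Nw (w : 'S_n) : rel 'I_n := fun i k => (i < k) && (w i < w k).

Lemma Nw_fwd w : fwd (Nw w). Proof. by move=> i k /andP []. Qed.
Lemma Nw_tr w : tr (Nw w).
Proof.
move=> i j k /andP [ij wij] /andP [jk wjk].
by rewrite /Nw (ltn_trans ij jk) (ltn_trans wij wjk).
Qed.
Lemma Nw_cotr w : cotr (Nw w).
Proof.
move=> i j k ij jk /andP [ik wik]; rewrite /Nw ij jk /=.
case: (ltnP (w i) (w j)) => // wji.
rewrite leq_eqVlt in wji; case/orP: wji => [/eqP /val_inj /perm_inj E|wji].
  by move: ij; rewrite E ltnn.
by rewrite (ltn_trans wji wik) orbT.
Qed.

Lemma U_cotr (R Q : rel 'I_n) : cotr R -> cotr Q -> cotr (fun a b => R a b || Q a b).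
Proof.
move=> cR cQ i j k ij jk /orP [H|H].
  by case/orP: (cR _ _ _ ij jk H) => ->; rewrite ?orbT.
by case/orP: (cQ _ _ _ ij jk H) => ->; rewrite ?orbT.
Qed.

Lemma U_fwd (R Q : rel 'I_n) : fwd R -> fwd Q -> fwd (fun a b => R a b || Q a b).
Proof. by move=> fR fQ i k /orP [/fR|/fQ]. Qed.

Definition NU (p q : 'S_n) : rel 'I_n := fun a b => Nw p a b || Nw q a b.
Definition MR (p q : 'S_n) : rel 'I_n := fun i k => (i < k) && ~~ TC (NU p q) i k.

Lemma NU_fwd p q : fwd (NU p q). Proof. apply: U_fwd; exact: Nw_fwd. Qed.
Lemma NU_cotr p q : cotr (NU p q). Proof. apply: U_cotr; exact: Nw_cotr. Qed.
Lemma TU_cotr p q : cotr (TU p q). Proof. apply: U_cotr; exact: Tw_cotr. Qed.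

Lemma MR_fwd p q : fwd (MR p q). Proof. by move=> i k /andP []. Qed.
Lemma MR_tr p q : tr (MR p q).
Proof.
move=> i j k /andP [ij nij] /andP [jk njk]; rewrite /MR (ltn_trans ij jk) /=.
apply/negP => Tik.
case/orP: (TC_cotr (@NU_fwd p q) (@NU_cotr p q) ij jk Tik) => H.
  by rewrite H in nij.
by rewrite H in njk.
Qed.
Lemma MR_cotr p q : cotr (MR p q).
Proof.
move=> i j k ij jk /andP [ik nik]; rewrite /MR ij jk /=.
apply/negP => /negP; rewrite negb_or !negbK => /andP [H1 H2].
by rewrite (TC_tr H1 H2) in nik.
Qed.

Definition meetp p q : 'S_n := mkperm (MR p q).
Definition joinp p q : 'S_n := mkperm (TC (TU p q)).

Lemma meetpT p q i k : Tw (meetp p q) i k = MR p q i k.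
Proof. by apply: mkpermTw; [exact: MR_fwd | exact: MR_tr | exact: MR_cotr]. Qed.

Lemma joinpT p q i k : Tw (joinp p q) i k = TC (TU p q) i k.
Proof.
apply: mkpermTw; [exact: TC_fwd | exact: TC_tr |].
apply: TC_cotr; [exact: TU_fwd | exact: TU_cotr].
Qed.

Lemma meetp_l p q : weak_le (meetp p q) p.
Proof.
apply/weak_leE => i k; rewrite meetpT => /andP [ik nT].
apply/negP => /negP => nTp; move: nT; rewrite TC1 //; first exact: NU_fwd.
by rewrite /NU /Nw ik (Tw_neg ik nTp).
Qed.

Lemma meetp_r p q : weak_le (meetp p q) q.
Proof.
apply/weak_leE => i k; rewrite meetpT => /andP [ik nT].
apply/negP => /negP => nTq; move: nT; rewrite TC1 //; first exact: NU_fwd.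
by rewrite /NU /Nw ik (Tw_neg ik nTq) orbT.
Qed.

Lemma Nw_anti (z p : 'S_n) : weak_le z p -> forall a b, Nw p a b -> Nw z a b.
Proof.
move=> /weak_leE zp a b /andP [ab pab]; rewrite /Nw ab /=.
apply: Tw_neg => //; apply/negP => /zp /andP [_]; rewrite ltnNge (ltnW pab).
done.
Qed.

Lemma meetp_glb z p q : weak_le z p -> weak_le z q -> weak_le z (meetp p q).
Proof.
move=> zp zq; apply/weak_leE => i k Tz; rewrite meetpT.
have /andP [ik zki] := Tz; rewrite /MR ik /=; apply/negP => TCik.
have : Nw z i k.
  apply: (TC_sub (@NU_fwd p q) (@Nw_tr z)) TCik => a b /orP [] H.
    exact: Nw_anti zp _ _ H.
  exact: Nw_anti zq _ _ H.
by case/andP => _; rewrite ltnNge (ltnW zki).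
Qed.

Lemma joinp_l p q : weak_le p (joinp p q).
Proof.
apply/weak_leE => i k Tp; rewrite joinpT TC1 //; first exact: TU_fwd.
by rewrite /TU Tp.
Qed.

Lemma joinp_r p q : weak_le q (joinp p q).
Proof.
apply/weak_leE => i k Tq; rewrite joinpT TC1 //; first exact: TU_fwd.
by rewrite /TU Tq orbT.
Qed.

Lemma joinp_lub z p q : weak_le p z -> weak_le q z -> weak_le (joinp p q) z.
Proof.
move=> /weak_leE pz /weak_leE qz; apply/weak_leE => i k; rewrite joinpT.
apply: TC_sub; [exact: TU_fwd | exact: Tw_tr |].
by move=> a b /orP [/pz|/qz].
Qed.

Lemma inQ_down (u w : 'S_n) : in_quotient J w -> weak_le u w -> in_quotient J u.
Proof.
move=> Hw uw k i j kJ ik jk.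
have ij : i < j by rewrite jk -ik.
apply: Tw_neg; first exact: ij.
apply/negP => Tu.
have /andP [_ wji] := (weak_leE u w).1 uw i j Tu.
have := Hw k i j kJ ik jk; lia.
Qed.

Lemma inQ_join p q : in_quotient J p -> in_quotient J q -> in_quotient J (joinp p q).
Proof.
move=> Hp Hq k i j kJ ik jk.
have ik' : nat_of_ord i = nat_of_ord k := ik.
have jk' : nat_of_ord j = (nat_of_ord k).+1 := jk.
have ij : i < j by rewrite jk -ik.
apply: Tw_neg; first exact: ij.
rewrite joinpT; apply/negP.
move=> /andP [_ /connect_first [E|[l [Rl cl]]]].
  by move: ij; rewrite E ltnn.
have il := TU_fwd Rl.
have lj := connect_fwd (@TU_fwd p q) cl.
have E : l = j by apply: val_inj => /=; lia.
move: Rl; rewrite E => /orP [] /andP [_].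
  by have := Hp k i j kJ ik jk; lia.
by have := Hq k i j kJ ik jk; lia.
Qed.

End S5.


Section S6.
Variable n : nat.
Variable J : {set 'I_n.-1}.

Lemma weak_refl (u : 'S_n) : weak_le u u. Proof. by []. Qed.
Lemma weak_trans (u v w : 'S_n) : weak_le u v -> weak_le v w -> weak_le u w.
Proof. by move=> uv vw i j ij /(uv i j ij) /(vw i j ij). Qed.

Notation d := (dd J).

Lemma dd_inQ w : in_quotient J w -> in_quotient J (d w).
Proof. by move=> Hw; apply: inQ_down Hw (@dd_le _ J w). Qed.

Lemma dd_A w : in_quotient J w -> avoid_J231 J (d w).
Proof. by move=> Hw; split; [exact: dd_inQ | exact: dd_nopat]. Qed.

Lemma dd_mono x y : weak_le x y -> weak_le (d x) (d y).
Proof. by move=> xy; apply: dd_max; [exact: dd_nopat | exact: weak_trans (@dd_le _ J x) xy]. Qed.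

Lemma dd_fix a : avoid_J231 J a -> d a = a.
Proof.
move=> [_ nh]; apply: weak_antisym; first exact: dd_le.
exact: dd_max nh (@weak_refl a).
Qed.

Lemma KU_fwd p q : fwd (KU J p q).
Proof. apply: U_fwd; exact: Kd_fwd. Qed.

Lemma lattice_part : is_lattice (avoid_J231 J).
Proof.
move=> x y [Px nx] [Py ny]; split.
  exists (d (meetp x y)); split.
  - exact: dd_A (inQ_down Px (@meetp_l _ x y)).
  - exact: weak_trans (@dd_le _ J _) (@meetp_l _ x y).
  - exact: weak_trans (@dd_le _ J _) (@meetp_r _ x y).
  - move=> z [_ nz] zx zy; apply: dd_max nz _; exact: meetp_glb.
exists (d (joinp x y)); split.
- exact: dd_A (inQ_join Px Py).
- exact: dd_max nx (@joinp_l _ x y).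
- exact: dd_max ny (@joinp_r _ x y).
- move=> z _ xz yz; apply: weak_trans (@dd_le _ J _) _; exact: joinp_lub.
Qed.

Definition Th (x y : 'S_n) : Prop := d x = d y.

Lemma meet_half x y z m m' : in_quotient J x -> d x = d y ->
  is_meet (in_quotient J) x z m -> is_meet (in_quotient J) y z m' ->
  weak_le (d m) (d m').
Proof.
move=> Px E [Pm mx mz _] [Pm' m'y m'z m'glb].
apply: dd_max; first exact: dd_nopat.
apply: m'glb.
- exact: dd_inQ.
- apply: weak_trans (dd_mono mx) _; rewrite E; exact: dd_le.
- exact: weak_trans (@dd_le _ J _) mz.
Qed.

Lemma join_half x y z m m' : in_quotient J x -> in_quotient J z -> d x = d y ->
  is_join (in_quotient J) x z m -> is_join (in_quotient J) y z m' ->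
  weak_le (d m) (d m').
Proof.
move=> Px Pz E [Pm xm zm mlub] [Pm' ym' zm' _].
have HV : forall i k, Tw m i k = TC (TU x z) i k.
  move=> i k; rewrite -joinpT; apply/idP/idP.
    apply: (weak_leE _ _).1; apply: mlub; first exact: inQ_join.
      exact: joinp_l.
    exact: joinp_r.
  by apply: (weak_leE _ _).1; apply: joinp_lub.
apply: dd_max; first exact: dd_nopat.
apply/weak_leE => i k; rewrite ddT.
apply: TC_sub; [exact: Kd_fwd | exact: Tw_tr |].
move=> a b /(C1 HV); apply: TC_sub; [exact: KU_fwd | exact: Tw_tr |].
move=> a' b' /orP [K|K].
  have : Tw (d x) a' b' by rewrite ddT TC1 //; exact: Kd_fwd.
  rewrite E => /(weak_leE _ _).1 H; apply: (weak_leE _ _).1 ym' _ _ _.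
  exact: H (@dd_le _ J y).
exact: (weak_leE _ _).1 zm' _ _ (Kd_sub K).
Qed.

Lemma congruence_part : lattice_congruence (in_quotient J) Th.
Proof.
split.
- by [].
- by move=> x y _ _; rewrite /Th => ->.
- by move=> x y z _ _ _; rewrite /Th => -> ->.
- move=> x y z m m' Px Py Pz E Hm Hm'; apply: weak_antisym.
    exact: meet_half Px E Hm Hm'.
  exact: meet_half Py (esym E) Hm' Hm.
- move=> x y z m m' Px Py Pz E Hm Hm'; apply: weak_antisym.
    exact: join_half Px Pz E Hm Hm'.
  exact: join_half Py Pz (esym E) Hm' Hm.
Qed.

Lemma iso_part : quotient_iso (in_quotient J) Th (avoid_J231 J).
Proof.
exists d; split.
- exact: dd_A.
- by move=> t At; exists t; split; [case: At | exact: dd_fix].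
- by [].
- move=> x y Px Py; split.
    move=> [m [[Pm mx my _] Em]]; rewrite -Em; exact: dd_mono.
  move=> H; exists (meetp x y); split.
    split.
    + exact: inQ_down Px (@meetp_l _ x y).
    + exact: meetp_l.
    + exact: meetp_r.
    + by move=> z _; apply: meetp_glb.
  apply: weak_antisym; first exact: dd_mono (@meetp_l _ x y).
  apply: dd_max; first exact: dd_nopat.
  apply: meetp_glb; first exact: dd_le.
  exact: weak_trans H (@dd_le _ J y).
Qed.

End S6.

Theorem theorem1p1 (n : nat) (J : {set 'I_n.-1}) :
  0 < n ->
  is_lattice (avoid_J231 J) /\
  exists Th : 'S_n -> 'S_n -> Prop,
    lattice_congruence (in_quotient J) Th /\
    quotient_iso (in_quotient J) Th (avoid_J231 J).
Proof.
move=> _; split; first exact: lattice_part.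
exists (Th J); split; [exact: congruence_part | exact: iso_part].
Qed.
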